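(* Let $(\mathbb S,+,\cdot)$ be an S-Field, let $s\in\mathbb S$ and $m,n\in\mathbb S_0$ with $m\neq 0$. Then $n\cdot\left(\frac{s}{m}\right)=\frac{n\cdot s}{m}$.
   Context: An S-Structure is a triple $(\mathbb S,+,\cdot)$ where $\mathbb S$ is a set and $+,\cdot$ are binary operations on $\mathbb S$ such that: $(\mathbb S,+)$ is a commutative group with identity $0$ (the inverse of $s$ is written $-s$, and $s-t:=s+(-t)$); $\mathbb S$ is closed under $\cdot$; and there exists $s\in\mathbb S$ with $0\cdot s\neq 0$ or $s\cdot 0\neq 0$. Multiplication binds tighter than addition. The structures considered come with a distinguished element of $\mathbb S$ denoted $1$. It is Commutative if $s\cdot t=t\cdot s$ for all $s,t$. For a Commutative S-Structure and $\alpha\in\mathbb S$, put $\mathbb S_\alpha=\{s\in\mathbb S:0\cdot s=s\cdot 0=\alpha\}$ and $\Lambda=\{\alpha\in\mathbb S:\mathbb S_\alpha\neq\emptyset\}$. Wheel Distributive: $s\cdot(t+r)+(s\cdot 0)=(s\cdot t)+(s\cdot r)$ for all $s,t,r\in\mathbb S$. S-Associative: for all $m,n\in\mathbb S_0$ and $s\in\mathbb S$, $m\cdot(n\cdot s)=(m\cdot n)\cdot s-([(m-1)\cdot(n-1)]\cdot(0\cdot s))$. Base: if $\mathbb S_0\neq\emptyset$ and $\alpha\in\Lambda$, $q\in\mathbb S_\alpha$ is a Base for $\mathbb S_\alpha$ if $q+\beta\in\mathbb S_\alpha$ for all $\beta\in\mathbb S_0$ and every $s\in\mathbb S_\alpha$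 equals $q+\beta$ for some $\beta\in\mathbb S_0$. Coordinated: $\mathbb S_0\neq\emptyset$ and every $\mathbb S_\alpha$ with $\alpha\in\Lambda$ has a Base. Standard Bases: a Coordinated Commutative S-Structure has Standard Bases if there is a specified element $q_0(1)\in\mathbb S_1$ which is a Base for $\mathbb S_1$, and for every $\alpha\in\Lambda$ the element $q_0(\alpha):=\alpha\cdot(q_0(1)+1)-1$ lies in $\mathbb S_\alpha$ and is a Base for $\mathbb S_\alpha$. An Essential S-Structure is an S-Structure that is Commutative, Wheel Distributive, S-Associative, has Standard Bases (in particular is Coordinated), satisfies $0,1\in\mathbb S_0$, and satisfies $\mathbb S_0=\{1\cdot x:x\in\mathbb S_0\}$. A Unity is an element $e\in\Lambda$ with $e\cdot s=s\cdot e=s$ for all $s\in\mathbb S$. Scalar Inverses: the structure has a Unity $e$ and for every $x\in\mathbb S_0$ with $x\neq 0$ there is $x^{-1}\in\mathbb S_0$ with $x\cdot x^{-1}=x^{-1}\cdot x=e$. An S-Ring is an Essential S-Structure with a Unity; an S-Field is an S-Ring with Scalar Inverses. Division By Scalars: for $s\in\mathbb S$ and $m\in\mathbb S_0$, $\frac{s}{m}$ denotes an element $q\in\mathbb S$ such that $s=m\cdot q=q\cdot m$. *)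

(* Defs.v *)
Record sops := SOps {
  car : Type;
  sadd : car -> car -> car;
  sopp : car -> car;
  szero : car;
  smul : car -> car -> car;
  sone : car;
  sq01 : car   (* the specified element q_0(1) *)
}.

Section SDefs.
Variable S : sops.
Local Notation T := (car S).
Local Notation "a + b" := (sadd S a b).
Local Notation "- a" := (sopp S a).
Local Notation "a - b" := (sadd S a (sopp S b)).
Local Notation "a * b" := (smul S a b).
Local Notation "0" := (szero S).
Local Notation "1" := (sone S).

(** (S,+) commutative group with identity 0 and inverse -; closure under
    multiplication is automatic; some s has 0*s <> 0 or s*0 <> 0. *)
Definition is_SStructure : Prop :=
  (forall a b c : T, a + (b + c) = (a + b) + c) /\
  (forall a b : T, a + b = b + a) /\
  (forall a : T, a + 0 = a) /\
  (forall a : T, a + (- a) = 0) /\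
  (exists s : T, 0 * s <> 0 \/ s * 0 <> 0).

Definition Commutative : Prop := forall s t : T, s * t = t * s.

Definition inS (alpha s : T) : Prop := 0 * s = alpha /\ s * 0 = alpha.

Definition inLambda (alpha : T) : Prop := exists s, inS alpha s.

Definition WheelDistributive : Prop :=
  forall s t r : T, s * (t + r) + (s * 0) = (s * t) + (s * r).

Definition SAssociative : Prop :=
  forall m n s : T, inS 0 m -> inS 0 n ->
    m * (n * s) = (m * n) * s - (((m - 1) * (n - 1)) * (0 * s)).

Definition IsBase (alpha q : T) : Prop :=
  inS alpha q /\
  (forall beta, inS 0 beta -> inS alpha (q + beta)) /\
  (forall s, inS alpha s -> exists beta, inS 0 beta /\ s = q + beta).

Definition Coordinated : Prop :=
  (exists x, inS 0 x) /\ (forall alpha, inLambda alpha -> exists q, IsBase alpha q).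

Definition q0 (alpha : T) : T := alpha * (sq01 S + 1) - 1.

Definition StandardBases : Prop :=
  Coordinated /\ Commutative /\
  inS 1 (sq01 S) /\ IsBase 1 (sq01 S) /\
  (forall alpha, inLambda alpha -> inS alpha (q0 alpha) /\ IsBase alpha (q0 alpha)).

Definition is_Essential : Prop :=
  is_SStructure /\ Commutative /\ WheelDistributive /\ SAssociative /\
  StandardBases /\ Coordinated /\ inS 0 0 /\ inS 0 1 /\
  (forall y, inS 0 y <-> exists x, inS 0 x /\ y = 1 * x).

Definition IsUnity (e : T) : Prop :=
  inLambda e /\ (forall s, e * s = s /\ s * e = s).

Definition ScalarInverses : Prop :=
  exists e, IsUnity e /\
    (forall x, inS 0 x -> x <> 0 ->
       exists y, inS 0 y /\ x * y = e /\ y * x = e).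

Definition is_SRing : Prop := is_Essential /\ exists e, IsUnity e.

Definition is_SField : Prop := is_SRing /\ ScalarInverses.

(** q is (a value of) s/m : s = m*q = q*m *)
Definition IsDivScalar (s m q : T) : Prop := s = m * q /\ s = q * m.

End SDefs.

(* Main.v *)
Require Import Defs.

Theorem proposition4p1p5 (S : sops) (HS : is_SField S) (s m n q q' : car S) :
  inS S (szero S) m -> inS S (szero S) n -> m <> szero S ->
  IsDivScalar S s m q ->
  IsDivScalar S (smul S n s) m q' ->
  smul S n q = q'.
Proof.
  intros Hm Hn Hm0 [Hs1 Hs2] [Ht1 Ht2].
  destruct S as [T add opp z mul one q01].
  unfold is_SField, is_SRing, is_Essential, is_SStructure, Commutative,
    WheelDistributive, SAssociative, ScalarInverses, IsUnity, inS in *; simpl in *.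
  destruct HS as [[[[A [C [Z [N _]]]] [Com [WD [SA [_ [_ [Z0 [O1 L]]]]]]]] _] [e [[_ Ue] Inv]]].
  clear Ht2 Hs2.
  assert (Z' : forall a, add z a = a) by (intro a; rewrite C; apply Z).
  assert (N' : forall a, add (opp a) a = z) by (intro a; rewrite C; apply N).
  assert (canc : forall a b c, add a b = add a c -> b = c).
  { intros a b c H. rewrite <- (Z' b), <- (Z' c), <- (N' a), <- !A, H. reflexivity. }
  assert (opp_uniq : forall a b, add a b = z -> b = opp a).
  { intros a b H. apply (canc a). rewrite H, N. reflexivity. }
  assert (oppopp : forall a, opp (opp a) = a).
  { intro a. symmetry. apply opp_uniq. apply N'. }
  assert (oppadd : forall a b, opp (add a b) = add (opp a) (opp b)).
  { intros a b. symmetry. apply opp_uniq.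
    rewrite (C (opp a) (opp b)), A, <- (A a b (opp b)), N, Z, N. reflexivity. }
  assert (opp0 : opp z = z).
  { symmetry. apply opp_uniq. apply Z. }
  assert (S0 : forall x, mul z x = z -> mul z x = z /\ mul x z = z).
  { intros x H. split; [exact H | rewrite Com; exact H]. }
  assert (lin : forall x a b, mul z x = z -> mul x (add a b) = add (mul x a) (mul x b)).
  { intros x a b H. rewrite <- WD, (Com x z), H, Z. reflexivity. }
  assert (linN : forall x a, mul z x = z -> mul x (opp a) = opp (mul x a)).
  { intros x a H. apply opp_uniq. rewrite <- lin by exact H. rewrite N, Com. exact H. }
  assert (S0add : forall a b, mul z a = z -> mul z b = z -> mul z (add a b) = z).
  { intros a b Ha Hb. rewrite lin by (destruct Z0; assumption). rewrite Ha, Hb. apply Z. }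
  assert (Zz : mul z z = z) by (destruct Z0; assumption).
  assert (S0opp : forall a, mul z a = z -> mul z (opp a) = z).
  { intros a Ha. rewrite linN by exact Zz. rewrite Ha. exact opp0. }
  assert (S1 : mul z one = z) by (destruct O1; assumption).
  assert (S1m : forall x, mul z x = z -> mul z (mul one x) = z).
  { intros x Hx. assert (H : exists y, (mul z y = z /\ mul y z = z) /\ mul one x = mul one y)
      by (exists x; split; [apply S0; exact Hx | reflexivity]).
    apply L in H. destruct H; assumption. }
  assert (rlin : forall a b w, mul (add a b) w = add (add (mul a w) (mul b w)) (opp (mul z w))).
  { intros a b w. rewrite (Com (add a b) w), (Com a w), (Com b w), (Com z w), <- (WD w a b).
    rewrite <- A, N, Z. reflexivity. }
  assert (Se : mul z e = z) by (rewrite Com; apply Ue).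
  assert (SA' : forall a b y, mul z a = z -> mul z b = z ->
     mul a (mul b y) = add (mul (mul a b) y)
       (opp (mul (mul (add a (opp one)) (add b (opp one))) (mul z y)))).
  { intros a b y Ha Hb. apply SA; apply S0; assumption. }
  assert (mv : forall x y w, x = add y (opp w) -> add x w = y).
  { intros x y w H. subst x. rewrite <- A, N', Z. reflexivity. }
  set (u := mul one one).
  assert (Hu : mul (opp one) (opp one) = u).
  { rewrite (linN _ _ (S0opp one S1)), (Com (opp one) one), (linN _ _ S1), oppopp. reflexivity. }
  assert (Ha : forall y, mul z (mul z y) = add (mul z y) (opp (mul u (mul z y)))).
  { intro y. rewrite (SA' z z y Zz Zz), Zz, Z', Hu. reflexivity. }
  assert (Hb : forall y, mul one (mul z y) = add (mul z y) (opp (mul z (mul z y)))).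
  { intro y. rewrite (SA' one z y S1 Zz), (Com one z), S1, N, Z', (S0opp one S1). reflexivity. }
  assert (HW : mul (add z (opp one)) (add e (opp one)) = add (opp one) u).
  { rewrite Z', Com, (linN _ _ (S0add _ _ Se (S0opp _ S1))), (Com _ one), (lin _ _ _ S1),
      (proj2 (Ue one)), (linN _ _ S1), oppadd, oppopp. reflexivity. }
  assert (phiQ : forall y, mul z (mul z y) = z).
  { intro y.
    pose proof (SA' z e y Zz Se) as Hc. rewrite (proj1 (Ue y)), Se, HW, rlin in Hc.
    pose proof (rlin (opp one) one (mul z y)) as Hd. rewrite N' in Hd.
    set (P := mul z y) in *. set (Q := mul z P) in *.
    set (a := mul (opp one) P) in *. set (b := mul one P) in *. set (c := mul u P) in *.
    pose proof (Ha y) as Ha1. pose proof (Hb y) as Hb1. fold P Q c in Ha1. fold P Q b in Hb1.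
    assert (Hbc : c = b).
    { apply (canc Q). apply mv in Ha1. apply mv in Hb1. rewrite Ha1, (C Q b), Hb1. reflexivity. }
    assert (Hc2 : z = opp (add (add a c) (opp Q))) by (apply (canc P); rewrite Z; exact Hc).
    apply (f_equal opp) in Hc2. rewrite oppopp, opp0 in Hc2. apply mv in Hc2. rewrite Z' in Hc2.
    symmetry in Hc2. clear Hc. rename Hc2 into Hc.
    apply mv in Hd. rewrite <- Hbc, Hc in Hd.
    apply (canc Q). rewrite Z. exact Hd. }
  assert (oneP : forall y, mul one (mul z y) = mul z y).
  { intro y. rewrite Hb, phiQ, opp0, Z. reflexivity. }
  assert (uP : forall y, mul u (mul z y) = mul z y).
  { intro y. pose proof (Ha y) as H. rewrite phiQ in H. apply mv in H. rewrite Z' in H. exact H. }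
  assert (rlinP : forall a b y, mul (add a b) (mul z y) = add (mul a (mul z y)) (mul b (mul z y))).
  { intros a b y. rewrite rlin, phiQ, opp0, Z. reflexivity. }
  assert (rlinNP : forall a y, mul (opp a) (mul z y) = opp (mul a (mul z y))).
  { intros a y. apply opp_uniq. rewrite <- rlinP, N, phiQ. reflexivity. }
  assert (phi_mul : forall x y, mul z x = z -> mul z (mul x y) = mul (mul one x) (mul z y)).
  { intros x y Hx. rewrite (SA' z x y Zz Hx), Hx, Z', (Com (opp one)),
      (linN _ _ (S0add x (opp one) Hx (S0opp one S1))), (Com _ one), (lin _ _ _ S1),
      (linN _ _ S1), rlinNP, rlinP, rlinNP, uP, oppopp.
    rewrite (C _ (opp (mul z y))), A, N, Z'. reflexivity. }
  assert (S0mul : forall a b, mul z a = z -> mul z b = z -> mul z (mul a b) = z).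
  { intros a b Ha0 Hb0. rewrite phi_mul, Hb0, Com, S1m by assumption. reflexivity. }
  assert (assocP : forall a b y, mul z a = z -> mul z b = z ->
     mul a (mul b (mul z y)) = mul (mul a b) (mul z y)).
  { intros a b y Ha0 Hb0. rewrite SA', phiQ, (Com _ z), S0mul, opp0, Z by
      (try apply S0add; try apply S0opp; assumption). reflexivity. }
  assert (assocS0 : forall a b c, mul z a = z -> mul z b = z -> mul z c = z ->
     mul a (mul b c) = mul (mul a b) c).
  { intros a b c Ha0 Hb0 Hc0. rewrite SA', Hc0, (Com _ z), S0mul, opp0, Z by
      (try apply S0add; try apply S0opp; assumption). reflexivity. }
  destruct (Inv m Hm Hm0) as [i [[Hi _] [Hmi Him]]].
  destruct Hm as [Hm1 _]. destruct Hn as [Hn1 _].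
  set (K := mul (add i (opp one)) (add m (opp one))).
  assert (E1 : forall x, x = add (mul i (mul m x)) (mul K (mul z x))).
  { intro x. rewrite (SA' i m x Hi Hm1), Him, (proj1 (Ue x)), <- A, N', Z. reflexivity. }
  assert (Hcomm : mul m (mul n q) = mul n s).
  { rewrite Hs1, (SA' m n q Hm1 Hn1), (SA' n m q Hn1 Hm1), (Com m n),
      (Com (add m (opp one)) (add n (opp one))). reflexivity. }
  assert (i1m : mul i (mul one m) = one).
  { rewrite (assocS0 i one m Hi S1 Hm1), (Com i one), <- (assocS0 one i m S1 Hi Hm1), Him,
      Com, (proj1 (Ue one)). reflexivity. }
  assert (step : mul (mul one m) (mul z q') = mul (mul one m) (mul z (mul n q))).
  { rewrite <- (phi_mul m q' Hm1), <- Ht1, (phi_mul n s Hn1), Hs1, (phi_mul m q Hm1),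
      (assocP _ _ q (S1m n Hn1) (S1m m Hm1)), (Com (mul one n)),
      <- (assocP _ _ q (S1m m Hm1) (S1m n Hn1)), <- (phi_mul n q Hn1). reflexivity. }
  assert (Hphi : mul z (mul n q) = mul z q').
  { transitivity (mul (mul i (mul one m)) (mul z (mul n q))).
    { rewrite i1m, oneP. reflexivity. }
    rewrite <- (assocP i (mul one m) (mul n q) Hi (S1m m Hm1)), <- step,
      (assocP i (mul one m) q' Hi (S1m m Hm1)), i1m, oneP. reflexivity. }
  rewrite (E1 (mul n q)), Hcomm, Ht1, Hphi, <- E1. reflexivity.
Qed.
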